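(* Let $f,g\colon\mathbb{R}\to\mathbb{R}$ be smooth $T$-periodic functions ($T>0$) with $\frac1T\int_0^Tg(t)\,dt=0$. Then there exists $\lambda_0$ such that for every $\lambda\geqslant\lambda_0$ with $\lambda\in\mathbb{N}$, the equation $$\ddot x=f(t)\sin x-(1+g(\lambda t))\cos x$$ has a $T$-periodic solution $x(t)$ with $x(t)\in(0,\pi)$ for all $t$.
   Context: The equation describes an inverted pendulum with a horizontally moving pivot point in a gravity field oscillating as $1+g(\lambda t)$. *)

(* Defs.v *)
From Stdlib Require Import Reals.
Open Scope R_scope.

Definition smooth (f : R -> R) : Prop :=
  exists D : nat -> R -> R,
    (forall t, D O t = f t) /\
    (forall (n : nat) (t : R), derivable_pt_lim (D n) t (D (S n) t)).

Definition periodic (T : R) (f : R -> R) : Prop :=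
  forall t, f (t + T) = f t.

Definition is_solution (F : R -> R -> R) (x : R -> R) : Prop :=
  exists x' : R -> R,
    (forall t, derivable_pt_lim x t (x' t)) /\
    (forall t, derivable_pt_lim x' t (F t (x t))).

(* Main.v *)
Require Import Defs.
From Stdlib Require Import Reals ZArith Lra Lia Psatz.
From Coquelicot Require Import Coquelicot.
Open Scope R_scope.

Lemma per_nat T (phi : R -> R) : periodic T phi -> forall m t, phi (t + INR m * T) = phi t.
Proof.
  intros H m; induction m as [|m IH]; intro t.
  - simpl. f_equal; ring.
  - rewrite S_INR. replace (t + (INR m + 1) * T) with ((t + INR m * T) + T) by ring.
    rewrite H. apply IH.
Qed.

Lemma per_nat_m T (phi : R -> R) : periodic T phi -> forall m t, phi (t - INR m * T) = phi t.
Proof.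
  intros H m t. rewrite <- (per_nat T phi H m (t - INR m * T)). f_equal; ring.
Qed.

Lemma per_Z T (phi : R -> R) : periodic T phi -> forall z t, phi (t - IZR z * T) = phi t.
Proof.
  intros H z t. destruct z as [|p|p].
  - f_equal. simpl. ring.
  - rewrite <- Znat.positive_nat_Z, <- INR_IZR_INZ. apply per_nat_m; auto.
  - replace (IZR (Z.neg p)) with (- IZR (Z.pos p)) by reflexivity.
    rewrite <- Znat.positive_nat_Z, <- INR_IZR_INZ.
    replace (t - - INR (Pos.to_nat p) * T) with (t + INR (Pos.to_nat p) * T) by ring.
    apply per_nat; auto.
Qed.

Lemma per_reduce T : 0 < T -> forall t, exists t', 0 <= t' <= T /\
   forall phi : R -> R, periodic T phi -> phi t = phi t'.
Proof.
  intros HT t. destruct (base_Int_part (t / T)) as [H1 H2].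
  set (z := Int_part (t / T)) in *.
  exists (t - IZR z * T). split.
  - assert (E : t = (t / T) * T) by (field; lra).
    split.
    + rewrite E at 1. nra.
    + rewrite E at 1. nra.
  - intros phi Hp. symmetry. apply per_Z; auto.
Qed.

Lemma per_bounded T (phi : R -> R) : 0 < T -> periodic T phi ->
  (forall t, continuity_pt phi t) -> exists M, forall t, Rabs (phi t) <= M.
Proof.
  intros HT Hp Hc.
  destruct (continuity_ab_maj (fun t => Rabs (phi t)) 0 T) as [mx [Hm _]].
  - lra.
  - intros c _. apply (continuity_pt_comp phi Rabs). apply Hc. apply Rcontinuity_abs.
  - exists (Rabs (phi mx)). intro t. destruct (per_reduce T HT t) as [t' [Ht' E]].
    rewrite (E phi Hp). apply Hm; auto.
Qed.

Lemma deriv_cont f f' : (forall t, derivable_pt_lim f t (f' t)) -> forall t, continuity_pt f t.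
Proof.
  intros H t. apply derivable_continuous_pt. exists (f' t). apply H.
Qed.

Lemma min_second (w w1 w2 : R -> R) t0 :
  (forall t, derivable_pt_lim w t (w1 t)) -> derivable_pt_lim w1 t0 (w2 t0) ->
  (forall s, w t0 <= w s) -> 0 <= w2 t0.
Proof.
  intros Hw Hw1 Hmin.
  destruct (Rle_or_lt 0 (w2 t0)) as [|Hl]; auto. exfalso.
  destruct (Hw1 (- w2 t0 / 2)) as [d Hd]; [lra|].
  assert (Hq : forall h, h <> 0 -> Rabs h < d ->
     (w1 (t0 + h) - w1 t0) / h < w2 t0 / 2).
  { intros h H0 H1. specialize (Hd h H0 H1). apply Rabs_def2 in Hd. lra. }
  assert (Hdp : 0 < d) by apply cond_pos.
  destruct (Rle_or_lt (w1 t0) 0) as [Hs|Hs].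
  - destruct (MVT_cor2 w w1 t0 (t0 + d/2)) as [c [Ec Hc]]; [lra| intros; apply Hw|].
    assert (Hc' : w1 c < 0).
    { set (h := c - t0). replace c with (t0 + h) by (unfold h; ring).
      assert (Hh : (w1 (t0 + h) - w1 t0) / h < w2 t0 / 2).
      { apply Hq. unfold h; lra. unfold h; rewrite Rabs_right; lra. }
      assert (E : w1 (t0 + h) - w1 t0 = (w1 (t0 + h) - w1 t0) / h * h) by (field; unfold h; lra).
      assert (0 < h) by (unfold h; lra). nra. }
    specialize (Hmin (t0 + d/2)). nra.
  - destruct (MVT_cor2 w w1 (t0 - d/2) t0) as [c [Ec Hc]]; [lra| intros; apply Hw|].
    assert (Hc' : 0 < w1 c).
    { set (h := c - t0). replace c with (t0 + h) by (unfold h; ring).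
      assert (Hh : (w1 (t0 + h) - w1 t0) / h < w2 t0 / 2).
      { apply Hq. unfold h; lra. unfold h; rewrite Rabs_left; lra. }
      assert (E : w1 (t0 + h) - w1 t0 = (w1 (t0 + h) - w1 t0) / h * h) by (field; unfold h; lra).
      assert (h < 0) by (unfold h; lra). nra. }
    specialize (Hmin (t0 - d/2)). nra.
Qed.

Lemma max_princ T K (w w1 w2 : R -> R) : 0 < T -> 0 < K -> periodic T w ->
  (forall t, derivable_pt_lim w t (w1 t)) -> (forall t, derivable_pt_lim w1 t (w2 t)) ->
  (forall t, w2 t <= K * w t) -> forall t, 0 <= w t.
Proof.
  intros HT HK Hp Hw Hw1 Hle t.
  destruct (continuity_ab_min w 0 T) as [t0 [Hm Ht0]]; [lra| intros; apply (deriv_cont w w1 Hw)|].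
  assert (Hg : forall s, w t0 <= w s).
  { intro s. destruct (per_reduce T HT s) as [s' [Hs' E]]. rewrite (E w Hp). apply Hm; auto. }
  pose proof (min_second w w1 w2 t0 Hw (Hw1 t0) Hg).
  specialize (Hle t0). specialize (Hg t). nra.
Qed.

Lemma exp_le a b : a <= b -> exp a <= exp b.
Proof. intros [H|H]. left; apply exp_increasing; auto. subst; lra. Qed.

Lemma cont_exp_lin a z : continuity_pt (fun s => exp (a * s)) z.
Proof.
  apply derivable_continuous_pt. exists (a * exp (a * z)).
  apply is_derive_Reals. auto_derive; auto. ring.
Qed.

Lemma cont_mulexp a (v : R -> R) : (forall t, continuity_pt v t) ->
  forall z, continuous (fun s => exp (a * s) * v s) z.
Proof.
  intros Hv z. apply continuity_pt_filterlim.
  apply continuity_pt_mult; [apply cont_exp_lin | apply Hv].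
Qed.

Lemma scalR (a x : R) : scal a x = a * x.
Proof. reflexivity. Qed.

Lemma is_derive_RInt0 (phi : R -> R) : (forall z, continuous phi z) ->
  forall x, is_derive (fun x => RInt phi 0 x) x (phi x).
Proof.
  intros Hc x. apply is_derive_RInt with (a := 0).
  - apply filter_forall. intro y. apply RInt_correct. apply ex_RInt_continuous. intros; apply Hc.
  - apply Hc.
Qed.

Lemma RInt_win (phi : R -> R) : (forall z, continuous phi z) ->
  forall a b, RInt phi a b = RInt phi 0 b - RInt phi 0 a.
Proof.
  intros Hc a b.
  assert (E : plus (RInt phi 0 a) (RInt phi a b) = RInt phi 0 b).
  { apply RInt_Chasles; apply ex_RInt_continuous; intros; apply Hc. }
  unfold plus in E; simpl in E. lra.
Qed.

Lemma deriv_RInt_win (phi : R -> R) a b : (forall z, continuous phi z) ->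
  forall t, is_derive (fun t => RInt phi (t + a) (t + b)) t (phi (t + b) - phi (t + a)).
Proof.
  intros Hc t.
  apply is_derive_ext with (f := fun t => RInt phi 0 (t + b) - RInt phi 0 (t + a)).
  { intro u. rewrite (RInt_win phi Hc (u + a) (u + b)). reflexivity. }
  apply (is_derive_minus (fun t => RInt phi 0 (t + b)) (fun t => RInt phi 0 (t + a))).
  - replace (phi (t + b)) with (scal 1 (phi (t + b))) by (unfold scal; simpl; unfold mult; simpl; ring).
    apply (is_derive_comp (fun x => RInt phi 0 x) (fun t => t + b)).
    apply is_derive_RInt0; auto. auto_derive; auto.
  - replace (phi (t + a)) with (scal 1 (phi (t + a))) by (unfold scal; simpl; unfold mult; simpl; ring).
    apply (is_derive_comp (fun x => RInt phi 0 x) (fun t => t + a)).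
    apply is_derive_RInt0; auto. auto_derive; auto.
Qed.

Section Sop.
Variables (k T : R).

Definition cS := / (2 * k * (1 - exp (- (k * T)))).
Definition A0 (v : R -> R) t := exp (- (k * t)) * RInt (fun s => exp (k * s) * v s) (t - T) t.
Definition B0 (v : R -> R) t := exp (k * t) * RInt (fun s => exp (- k * s) * v s) t (t + T).
Definition Sop v t := cS * (A0 v t + B0 v t).
Definition S1 v t := cS * k * (B0 v t - A0 v t).

End Sop.

Lemma exRI (phi : R -> R) : (forall z, continuous phi z) -> forall a b, @ex_RInt R_NormedModule phi a b.
Proof. intros Hc a b. apply (@ex_RInt_continuous R_CompleteNormedModule). intros; apply Hc. Qed.

Lemma der_mult (f g : R -> R) x df dg : is_derive f x df -> is_derive g x dg ->
  is_derive (fun y => f y * g y) x (df * g x + f x * dg).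
Proof. intros. apply (is_derive_mult f g x df dg); auto. intros; apply Rmult_comm. Qed.

Lemma der_plus (f g : R -> R) x df dg : is_derive f x df -> is_derive g x dg ->
  is_derive (fun y => f y + g y) x (df + dg).
Proof. intros. apply (is_derive_plus f g x df dg); auto. Qed.

Lemma der_minus (f g : R -> R) x df dg : is_derive f x df -> is_derive g x dg ->
  is_derive (fun y => f y - g y) x (df - dg).
Proof. intros. apply (is_derive_minus f g x df dg); auto. Qed.

Ltac toR := match goal with |- @eq _ ?a ?b => change (@eq R a b) end.

Section SopProps.
Variables (k T : R) (v : R -> R).
Hypothesis (Hk : 0 < k) (HT : 0 < T) (Hv : forall t, continuity_pt v t) (Hp : periodic T v).

Let e := exp (- (k * T)).

Lemma e_lt1 : 0 < e < 1.
Proof.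
  unfold e. split. apply exp_pos. rewrite <- exp_0. apply exp_increasing. nra.
Qed.

Lemma A0_der (t : R) : is_derive (A0 k T v) t (- k * A0 k T v t + (1 - e) * v t).
Proof.
  set (phi := fun s => exp (k * s) * v s).
  assert (Hc : forall z, continuous phi z) by (apply cont_mulexp; auto).
  assert (HW := deriv_RInt_win phi (- T) 0 Hc t).
  assert (HE : is_derive (fun t => exp (- (k * t))) t (- k * exp (- (k * t)))).
  { auto_derive; auto. rewrite Rmult_1_r. reflexivity. }
  pose proof (der_mult _ _ t _ _ HE HW) as H.
  apply is_derive_ext with (f := fun t => exp (- (k * t)) * RInt phi (t + - T) (t + 0)).
  { intro u. change R in u. unfold A0. f_equal. replace (u + - T) with (u - T) by ring.
    replace (u + 0) with u by ring. reflexivity. }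
  replace (- k * A0 k T v t + (1 - e) * v t) with
    (- k * exp (- (k * t)) * RInt phi (t + - T) (t + 0) +
     exp (- (k * t)) * (phi (t + 0) - phi (t + - T))); [exact H|].
  unfold A0, phi, e.
  change (t + - T) with (t - T). rewrite Rplus_0_r.
  assert (Ev : v (t - T) = v t).
  { rewrite <- (Hp (t - T)). f_equal. ring. }
  rewrite Ev.
  assert (E1 : exp (- (k * t)) * exp (k * t) = 1).
  { rewrite <- exp_plus. replace (- (k * t) + k * t) with 0 by ring. apply exp_0. }
  assert (E2 : exp (- (k * t)) * exp (k * (t - T)) = exp (- (k * T))).
  { rewrite <- exp_plus. f_equal. ring. }
  transitivity (- k * exp (- (k * t)) * RInt (fun s : R => exp (k * s) * v s) (t - T) t +
     (exp (- (k * t)) * exp (k * t)) * v t - (exp (- (k * t)) * exp (k * (t - T))) * v t).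
  - toR. ring.
  - toR. rewrite E1, E2. ring.
Qed.

Lemma B0_der (t : R) : is_derive (B0 k T v) t (k * B0 k T v t - (1 - e) * v t).
Proof.
  set (phi := fun s => exp (- k * s) * v s).
  assert (Hc : forall z, continuous phi z) by (apply cont_mulexp; auto).
  assert (HW := deriv_RInt_win phi 0 T Hc t).
  assert (HE : is_derive (fun t => exp (k * t)) t (k * exp (k * t))).
  { auto_derive; auto. rewrite Rmult_1_r. reflexivity. }
  pose proof (der_mult _ _ t _ _ HE HW) as H.
  apply is_derive_ext with (f := fun t => exp (k * t) * RInt phi (t + 0) (t + T)).
  { intro u. change R in u. unfold B0. f_equal. replace (u + 0) with u by ring. reflexivity. }
  replace (k * B0 k T v t - (1 - e) * v t) with
    (k * exp (k * t) * RInt phi (t + 0) (t + T) +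
     exp (k * t) * (phi (t + T) - phi (t + 0))); [exact H|].
  unfold B0, phi, e.
  replace (t + 0) with t by ring.
  rewrite (Hp t).
  assert (E1 : exp (k * t) * exp (- k * t) = 1).
  { rewrite <- exp_plus. replace (k * t + - k * t) with 0 by ring. apply exp_0. }
  assert (E2 : exp (k * t) * exp (- k * (t + T)) = exp (- (k * T))).
  { rewrite <- exp_plus. f_equal. ring. }
  transitivity (k * exp (k * t) * RInt (fun s : R => exp (- k * s) * v s) t (t + T) +
     (exp (k * t) * exp (- k * (t + T))) * v t - (exp (k * t) * exp (- k * t)) * v t).
  - toR. ring.
  - toR. rewrite E1, E2. ring.
Qed.

Lemma cS_prop : 2 * cS k T * k * (1 - e) = 1.
Proof.
  pose proof e_lt1. unfold cS. fold e. field. split; lra.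
Qed.

Lemma Sop_der t : derivable_pt_lim (Sop k T v) t (S1 k T v t).
Proof.
  apply is_derive_Reals.
  pose proof (der_plus _ _ t _ _ (A0_der t) (B0_der t)) as H.
  pose proof (is_derive_scal _ t (cS k T) _ H) as H2.
  unfold Sop, S1. replace (cS k T * k * (B0 k T v t - A0 k T v t)) with
    (cS k T * (- k * A0 k T v t + (1 - e) * v t + (k * B0 k T v t - (1 - e) * v t))) by ring.
  exact H2.
Qed.

Lemma S1_der t : derivable_pt_lim (S1 k T v) t (k ^ 2 * Sop k T v t - v t).
Proof.
  apply is_derive_Reals.
  pose proof (der_minus _ _ t _ _ (B0_der t) (A0_der t)) as H.
  pose proof (is_derive_scal _ t (cS k T * k) _ H) as H2.
  unfold Sop, S1.
  replace (k ^ 2 * (cS k T * (A0 k T v t + B0 k T v t)) - v t) with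
    (cS k T * k * (k * B0 k T v t - (1 - e) * v t - (- k * A0 k T v t + (1 - e) * v t))).
  exact H2.
  pose proof cS_prop. transitivity (k ^ 2 * (cS k T * (A0 k T v t + B0 k T v t)) - (2 * cS k T * k * (1 - e)) * v t).
  ring. rewrite H0. ring.
Qed.

End SopProps.

Lemma shift_RInt (phi : R -> R) T c a b : (forall z, continuous phi z) ->
  (forall y, phi (y + T) = c * phi y) -> RInt phi (a + T) (b + T) = c * RInt phi a b.
Proof.
  intros Hc Hs.
  pose proof (RInt_comp_lin phi 1 T a b) as H.
  replace (1 * a + T) with (a + T) in H by ring.
  replace (1 * b + T) with (b + T) in H by ring.
  rewrite <- H. 2: { apply ex_RInt_continuous; intros; apply Hc. }
  transitivity (RInt (fun y => c * phi y) a b).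
  - apply RInt_ext. intros x _. rewrite scalR. rewrite <- Hs. rewrite Rmult_1_l. f_equal. ring.
  - apply (RInt_scal phi a b c). apply ex_RInt_continuous; intros; apply Hc.
Qed.

Section More.
Variables (k T : R).
Hypothesis (Hk : 0 < k) (HT : 0 < T).

Lemma cS_pos : 0 < cS k T.
Proof.
  unfold cS. apply Rinv_0_lt_compat.
  assert (exp (- (k * T)) < 1). { rewrite <- exp_0. apply exp_increasing. nra. }
  nra.
Qed.

Lemma Sop_per v : (forall t, continuity_pt v t) -> periodic T v -> periodic T (Sop k T v).
Proof.
  intros Hv Hp t. unfold Sop, A0, B0. f_equal. f_equal.
  - replace (t + T - T) with (t - T + T) by ring.
    rewrite (shift_RInt _ T (exp (k * T))).
    + replace (- (k * (t + T))) with (- (k * t) + - (k * T)) by ring.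
      rewrite exp_plus, !exp_Ropp. field. split; apply Rgt_not_eq, exp_pos.
    + apply cont_mulexp; auto.
    + intro y. rewrite Hp. replace (k * (y + T)) with (k * y + k * T) by ring.
      rewrite exp_plus. ring.
  - replace (t + T + T) with ((t + T) + T) by ring.
    rewrite (shift_RInt _ T (exp (- k * T))).
    + replace (k * (t + T)) with (k * t + k * T) by ring.
      replace (- k * T) with (- (k * T)) by ring.
      rewrite exp_plus, !exp_Ropp. field. apply Rgt_not_eq, exp_pos.
    + apply cont_mulexp; auto.
    + intro y. rewrite Hp. replace (- k * (y + T)) with (- k * y + - k * T) by ring.
      rewrite exp_plus. ring.
Qed.

Lemma A0_bound v t V : (forall s, continuity_pt v s) ->
  (forall s, t - T <= s <= t + T -> Rabs (v s) <= V) -> Rabs (A0 k T v t) <= T * V.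
Proof.
  intros Hv HV. unfold A0.
  rewrite Rabs_mult, (Rabs_pos_eq (exp _)) by (left; apply exp_pos).
  assert (HI : Rabs (RInt (fun s => exp (k * s) * v s) (t - T) t) <= (t - (t - T)) * (exp (k * t) * V)).
  { apply abs_RInt_le_const. lra. apply exRI; intros; apply cont_mulexp; auto.
    intros s Hs. rewrite Rabs_mult, (Rabs_pos_eq (exp _)) by (left; apply exp_pos).
    assert (exp (k * s) <= exp (k * t)) by (apply exp_le; nra).
    assert (Rabs (v s) <= V) by (apply HV; lra).
    assert (0 <= Rabs (v s)) by apply Rabs_pos.
    assert (0 < exp (k * s)) by apply exp_pos. nra. }
  assert (E : exp (- (k * t)) * exp (k * t) = 1).
  { rewrite <- exp_plus. replace (- (k * t) + k * t) with 0 by ring. apply exp_0. }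
  assert (0 < exp (- (k * t))) by apply exp_pos.
  replace (T * V) with (exp (- (k * t)) * ((t - (t - T)) * (exp (k * t) * V))).
  - apply Rmult_le_compat_l; lra.
  - transitivity ((exp (- (k * t)) * exp (k * t)) * T * V). ring. rewrite E. ring.
Qed.

Lemma B0_bound v t V : (forall s, continuity_pt v s) ->
  (forall s, t - T <= s <= t + T -> Rabs (v s) <= V) -> Rabs (B0 k T v t) <= T * V.
Proof.
  intros Hv HV. unfold B0.
  rewrite Rabs_mult, (Rabs_pos_eq (exp _)) by (left; apply exp_pos).
  assert (HI : Rabs (RInt (fun s => exp (- k * s) * v s) t (t + T)) <= (t + T - t) * (exp (- k * t) * V)).
  { apply abs_RInt_le_const. lra. apply exRI; intros; apply cont_mulexp; auto.
    intros s Hs. rewrite Rabs_mult, (Rabs_pos_eq (exp _)) by (left; apply exp_pos).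
    assert (exp (- k * s) <= exp (- k * t)) by (apply exp_le; nra).
    assert (Rabs (v s) <= V) by (apply HV; lra).
    assert (0 <= Rabs (v s)) by apply Rabs_pos.
    assert (0 < exp (- k * s)) by apply exp_pos. nra. }
  assert (E : exp (k * t) * exp (- k * t) = 1).
  { rewrite <- exp_plus. replace (k * t + - k * t) with 0 by ring. apply exp_0. }
  assert (0 < exp (k * t)) by apply exp_pos.
  replace (T * V) with (exp (k * t) * ((t + T - t) * (exp (- k * t) * V))).
  - apply Rmult_le_compat_l; lra.
  - transitivity ((exp (k * t) * exp (- k * t)) * T * V). ring. rewrite E. ring.
Qed.

Lemma S1_bound v V : (forall s, continuity_pt v s) -> (forall s, Rabs (v s) <= V) ->
  forall t, Rabs (S1 k T v t) <= cS k T * k * (2 * T * V).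
Proof.
  intros Hv HV t. unfold S1.
  pose proof (A0_bound v t V Hv (fun s _ => HV s)).
  pose proof (B0_bound v t V Hv (fun s _ => HV s)).
  pose proof cS_pos.
  rewrite Rabs_mult, (Rabs_pos_eq (cS k T * k)) by nra.
  apply Rmult_le_compat_l. nra.
  eapply Rle_trans. apply Rabs_triang. rewrite Rabs_Ropp. lra.
Qed.

Lemma A0_minus v1 v2 t : (forall s, continuity_pt v1 s) -> (forall s, continuity_pt v2 s) ->
  A0 k T (fun s => v1 s - v2 s) t = A0 k T v1 t - A0 k T v2 t.
Proof.
  intros H1 H2. unfold A0. rewrite <- Rmult_minus_distr_l. f_equal.
  transitivity (RInt (fun s => minus (exp (k * s) * v1 s) (exp (k * s) * v2 s)) (t - T) t).
  - apply RInt_ext. intros; unfold minus, plus, opp; simpl. ring.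
  - apply (@RInt_minus R_CompleteNormedModule); apply exRI; intros; apply cont_mulexp; auto.
Qed.

Lemma B0_minus v1 v2 t : (forall s, continuity_pt v1 s) -> (forall s, continuity_pt v2 s) ->
  B0 k T (fun s => v1 s - v2 s) t = B0 k T v1 t - B0 k T v2 t.
Proof.
  intros H1 H2. unfold B0. rewrite <- Rmult_minus_distr_l. f_equal.
  transitivity (RInt (fun s => minus (exp (- k * s) * v1 s) (exp (- k * s) * v2 s)) t (t + T)).
  - apply RInt_ext. intros; unfold minus, plus, opp; simpl. ring.
  - apply (@RInt_minus R_CompleteNormedModule); apply exRI; intros; apply cont_mulexp; auto.
Qed.

Lemma Sop_conv (vs : nat -> R -> R) (w : R -> R) t :
  (forall j s, continuity_pt (vs j) s) -> (forall s, continuity_pt w s) ->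
  (forall eps, 0 < eps -> exists J, forall j, (J <= j)%nat -> forall s, t - T <= s <= t + T ->
      Rabs (vs j s - w s) <= eps) ->
  is_lim_seq (fun j => Sop k T (vs j) t) (Sop k T w t).
Proof.
  intros Hvs Hw Hconv. apply is_lim_seq_spec. intro eps.
  pose proof cS_pos as Hc.
  set (C := cS k T * (2 * T)).
  assert (HC : 0 < C) by (unfold C; nra).
  destruct (Hconv (eps / (2 * C))) as [J HJ].
  { apply Rdiv_lt_0_compat. apply cond_pos. lra. }
  exists J. intros j Hj.
  assert (Hd : forall s, continuity_pt (fun s => vs j s - w s) s).
  { intro s. apply continuity_pt_minus; auto. }
  pose proof (A0_bound _ t _ Hd (HJ j Hj)) as HA.
  pose proof (B0_bound _ t _ Hd (HJ j Hj)) as HB.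
  rewrite A0_minus in HA by auto. rewrite B0_minus in HB by auto.
  unfold Sop.
  replace (cS k T * (A0 k T (vs j) t + B0 k T (vs j) t) - cS k T * (A0 k T w t + B0 k T w t))
    with (cS k T * ((A0 k T (vs j) t - A0 k T w t) + (B0 k T (vs j) t - B0 k T w t))) by ring.
  rewrite Rabs_mult, (Rabs_pos_eq (cS k T)) by lra.
  assert (Rabs ((A0 k T (vs j) t - A0 k T w t) + (B0 k T (vs j) t - B0 k T w t)) <= 2 * (T * (eps / (2 * C)))).
  { eapply Rle_trans. apply Rabs_triang. lra. }
  assert (E : cS k T * (2 * (T * (eps / (2 * C)))) = eps / 2) by (unfold C; field; lra).
  assert (0 < eps) by apply cond_pos.
  apply Rle_lt_trans with (cS k T * (2 * (T * (eps / (2 * C))))).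
  apply Rmult_le_compat_l; lra. lra.
Qed.

End More.

Lemma absI a b : Rabs a <= b -> - b <= a <= b.
Proof. unfold Rabs; destruct (Rcase_abs a); intros; lra. Qed.

Lemma lim_le_ev (u : nat -> R) (l c : R) j0 : is_lim_seq u l -> (forall m, (j0 <= m)%nat -> u m <= c) -> l <= c.
Proof.
  intros H Hu. destruct (Rle_or_lt l c) as [|Hlt]; auto. exfalso.
  apply is_lim_seq_spec in H; unfold is_lim_seq' in H. destruct (H (mkposreal (l - c) ltac:(lra))) as [N HN].
  specialize (HN (max N j0) ltac:(lia)). specialize (Hu (max N j0) ltac:(lia)).
  simpl in HN. apply Rabs_def2 in HN. lra.
Qed.

Lemma lim_ge_ev (u : nat -> R) (l c : R) j0 : is_lim_seq u l -> (forall m, (j0 <= m)%nat -> c <= u m) -> c <= l.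
Proof.
  intros H Hu. destruct (Rle_or_lt c l) as [|Hlt]; auto. exfalso.
  apply is_lim_seq_spec in H; unfold is_lim_seq' in H. destruct (H (mkposreal (c - l) ltac:(lra))) as [N HN].
  specialize (HN (max N j0) ltac:(lia)). specialize (Hu (max N j0) ltac:(lia)).
  simpl in HN. apply Rabs_def2 in HN. lra.
Qed.

Section Unif.
Variables (xs : nat -> R -> R) (xl : R -> R) (L : R).
Hypothesis (Hmono : forall j s, xs j s <= xs (S j) s)
  (Hlim : forall s, is_lim_seq (fun j => xs j s) (xl s))
  (HL : 0 <= L) (Hlip : forall j s1 s2, Rabs (xs j s1 - xs j s2) <= L * Rabs (s1 - s2)).

Lemma mono_le j m s : (j <= m)%nat -> xs j s <= xs m s.
Proof.
  induction 1. lra. specialize (Hmono m s). lra.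
Qed.

Lemma below_lim j s : xs j s <= xl s.
Proof. apply (lim_ge_ev (fun m => xs m s) _ _ j (Hlim s)). intros; apply mono_le; auto. Qed.

Lemma key_ineq j s p : xl s - xs j s <= xl p - xs j p + 2 * L * Rabs (s - p).
Proof.
  apply (lim_le_ev (fun m => xs m s - xs j s) _ _ j).
  - apply is_lim_seq_minus'. apply Hlim. apply is_lim_seq_const.
  - intros m Hm. pose proof (Hlip m s p). pose proof (Hlip j s p).
    pose proof (below_lim m p). apply absI in H. apply absI in H0. lra.
Qed.

Lemma unif_conv a b eps : 0 < eps -> exists J, forall j, (J <= j)%nat ->
  forall s, a <= s <= b -> Rabs (xs j s - xl s) <= eps.
Proof.
  intros He.
  set (h := eps / (4 * L + 1)).
  assert (Hh : 0 < h) by (unfold h; apply Rdiv_lt_0_compat; lra).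
  assert (Hh2 : 2 * L * h <= eps / 2).
  { unfold h. apply Rmult_le_reg_r with (4 * L + 1). lra.
    field_simplify; try lra. }
  assert (Hpt : forall p, exists J, forall j, (J <= j)%nat -> xl p - xs j p <= eps / 2).
  { intro p. pose proof (Hlim p) as H. apply is_lim_seq_spec in H; unfold is_lim_seq' in H.
    destruct (H (mkposreal (eps/2) ltac:(lra))) as [N HN]. exists N. intros j Hj.
    specialize (HN j Hj). simpl in HN. apply Rabs_def2 in HN. lra. }
  assert (Hclaim : forall m, exists J, forall j, (J <= j)%nat ->
     forall s, a <= s <= a + INR m * h -> xl s - xs j s <= eps).
  { induction m as [|m [J1 HJ1]].
    - destruct (Hpt a) as [J HJ]. exists J. intros j Hj s Hs. simpl in Hs.
      pose proof (key_ineq j s a). pose proof (HJ j Hj).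
      assert (Rabs (s - a) = 0) by (rewrite Rabs_right; lra).
      pose proof (Rabs_pos (s - a)). nra.
    - set (p := a + INR (S m) * h).
      destruct (Hpt p) as [J2 HJ2]. exists (max J1 J2). intros j Hj s Hs.
      destruct (Rle_or_lt s (a + INR m * h)) as [Hs1|Hs1].
      + apply HJ1. lia. lra.
      + pose proof (key_ineq j s p). pose proof (HJ2 j ltac:(lia)).
        assert (Rabs (s - p) <= h).
        { unfold p in *. rewrite S_INR in *. apply Rabs_le; split; lra. }
        assert (2 * L * Rabs (s - p) <= 2 * L * h) by (apply Rmult_le_compat_l; lra).
        lra. }
  destruct (INR_archimed h (b - a) Hh) as [m Hm].
  destruct (Hclaim m) as [J HJ]. exists J. intros j Hj s Hs.
  pose proof (below_lim j s).
  rewrite Rabs_left1 by lra.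
  destruct (Rle_or_lt s a) as [Hsa|Hsa].
  - assert (s = a) by lra. subst. specialize (HJ j Hj a). assert (0 <= INR m * h).
    { apply Rmult_le_pos; [apply pos_INR|lra]. } specialize (HJ ltac:(lra)). lra.
  - specialize (HJ j Hj s ltac:(lra)). lra.
Qed.

Lemma lim_lip s1 s2 : Rabs (xl s1 - xl s2) <= L * Rabs (s1 - s2).
Proof.
  assert (H : is_lim_seq (fun j => xs j s1 - xs j s2) (xl s1 - xl s2)).
  { apply is_lim_seq_minus'; apply Hlim. }
  apply Rabs_le. split.
  - apply (lim_ge_ev _ _ _ O H). intros m _. pose proof (Hlip m s1 s2). apply absI in H0. lra.
  - apply (lim_le_ev _ _ _ O H). intros m _. pose proof (Hlip m s1 s2). apply absI in H0. lra.
Qed.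

End Unif.

Lemma sin_lip x y : Rabs (sin y - sin x) <= Rabs (y - x).
Proof.
  destruct (MVT_abs sin cos x y) as [c [E _]].
  { intros; apply derivable_pt_lim_sin. }
  rewrite E. pose proof (COS_bound c). pose proof (Rabs_pos (y - x)).
  assert (Rabs (cos c) <= 1) by (apply Rabs_le; lra). nra.
Qed.

Lemma cos_lip x y : Rabs (cos y - cos x) <= Rabs (y - x).
Proof.
  destruct (MVT_abs cos (fun c => - sin c) x y) as [c [E _]].
  { intros; apply derivable_pt_lim_cos. }
  rewrite E. pose proof (SIN_bound c). pose proof (Rabs_pos (y - x)).
  assert (Rabs (- sin c) <= 1) by (rewrite Rabs_Ropp; apply Rabs_le; lra). nra.
Qed.

Lemma sin_le_id x : 0 <= x -> sin x <= x.
Proof.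
  intro H. pose proof (sin_lip 0 x). rewrite sin_0, !Rminus_0_r in H0.
  rewrite (Rabs_pos_eq x) in H0 by lra. apply absI in H0. lra.
Qed.

Lemma one_minus_cos x : 0 <= 1 - cos x <= x * x / 2.
Proof.
  pose proof (cos_2a_sin (x / 2)). replace (2 * (x / 2)) with x in H by field.
  pose proof (sin_lip 0 (x/2)). rewrite sin_0, !Rminus_0_r in H0.
  assert (E : Rabs (x/2) * Rabs (x/2) = (x/2) * (x/2)).
  { rewrite <- Rabs_mult. apply Rabs_pos_eq. nra. }
  apply absI in H0. split; nra.
Qed.

Lemma key_trig Mf Mg eps th a b : 0 <= Mf -> 0 <= Mg -> 0 < eps ->
  eps * (4 * (1 + Mf + Mg)) <= 1 -> eps / 2 <= th <= 3 * eps / 2 ->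
  Rabs a <= Mf -> Rabs b <= Mg -> 0 <= cos th - a * sin th - b * (1 - cos th).
Proof.
  intros HMf HMg He Heps Hth Ha Hb.
  assert (HthD : th * (1 + Mf + Mg) <= 3 / 8) by nra.
  assert (Hth1 : th <= 3 / 8) by nra.
  pose proof PI2_1.
  assert (Hs : 0 <= sin th <= th) by (split; [apply sin_ge_0; lra | apply sin_le_id; lra]).
  pose proof (one_minus_cos th) as Hc.
  apply absI in Ha. apply absI in Hb.
  assert (a * sin th <= Mf * th) by nra.
  assert (b * (1 - cos th) <= Mg * (th * th / 2)) by nra.
  assert (Mf * th <= 3 / 8) by nra.
  assert ((1 + Mg) * th <= 3 / 8) by nra.
  assert ((1 + Mg) * th * th <= 3 / 8 * (3 / 8)) by nra.
  nra.
Qed.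

Lemma smooth_cont f : smooth f -> forall t, continuity_pt f t.
Proof.
  intros [D [H0 H1]] t.
  assert (E : forall t, f t = D O t) by (intros; rewrite H0; auto).
  apply (continuity_pt_ext (D O)). intros; auto.
  apply (deriv_cont (D O) (D 1%nat)). intros; apply H1.
Qed.

Lemma cont_conv (phi : R -> R) : (forall z, continuity_pt phi z) -> forall z, continuous phi z.
Proof. intros H z. apply continuity_pt_filterlim. apply H. Qed.

Lemma const_zero_der (F : R -> R) : (forall t, derivable_pt_lim F t 0) -> forall a b, F a = F b.
Proof.
  intros H a b. destruct (MVT_abs F (fun _ => 0) a b) as [c [E _]].
  intros; apply H. rewrite Rabs_R0, Rmult_0_l in E.
  apply Rabs_eq_0 in E. lra.
Qed.

Lemma prim_der (phi : R -> R) : (forall z, continuity_pt phi z) ->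
  forall t, derivable_pt_lim (fun x => RInt phi 0 x) t (phi t).
Proof.
  intros Hc t. apply is_derive_Reals. apply is_derive_RInt0. apply cont_conv; auto.
Qed.

Lemma prim_per T (phi : R -> R) : (forall z, continuity_pt phi z) -> periodic T phi ->
  RInt phi 0 T = 0 -> periodic T (fun x => RInt phi 0 x).
Proof.
  intros Hc Hp H0 tau. simpl.
  assert (Hc' := cont_conv phi Hc).
  assert (HD : forall t, derivable_pt_lim (fun t => RInt phi (t + 0) (t + T)) t 0).
  { intro t. apply is_derive_Reals.
    pose proof (deriv_RInt_win phi 0 T Hc' t) as D.
    assert (E : phi (t + T) - phi (t + 0) = 0) by (rewrite Rplus_0_r, Hp; ring).
    rewrite E in D. exact D. }
  pose proof (const_zero_der _ HD tau 0) as E. simpl in E.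
  rewrite !Rplus_0_l, Rplus_0_r, H0 in E.
  rewrite (RInt_win phi Hc' tau (tau + T)) in E. lra.
Qed.

Lemma lower_build (g : R -> R) T : 0 < T -> (forall t, continuity_pt g t) -> periodic T g ->
  RInt g 0 T = 0 ->
  exists H H1 : R -> R, (forall t, derivable_pt_lim H t (H1 t)) /\
    (forall t, derivable_pt_lim H1 t (g t)) /\ periodic T H.
Proof.
  intros HT Hc Hp H0.
  set (G := fun x => RInt g 0 x).
  assert (HG : forall t, derivable_pt_lim G t (g t)) by (apply prim_der; auto).
  assert (HGc : forall t, continuity_pt G t) by (apply (deriv_cont G g HG)).
  assert (HGp : periodic T G) by (apply prim_per; auto).
  set (m := RInt G 0 T / T).
  set (G0 := fun x => G x - m).
  assert (HG0 : forall t, derivable_pt_lim G0 t (g t)).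
  { intro t. replace (g t) with (g t - 0) by ring. apply derivable_pt_lim_minus. apply HG.
    apply derivable_pt_lim_const. }
  assert (HG0c : forall t, continuity_pt G0 t) by (apply (deriv_cont G0 g HG0)).
  assert (HG0p : periodic T G0) by (intro t; unfold G0; rewrite HGp; auto).
  assert (HI : RInt G0 0 T = 0).
  { unfold G0.
    assert (E : RInt (fun x => minus (G x) m) 0 T = minus (RInt G 0 T) (RInt (fun _ => m) 0 T)).
    { apply (@RInt_minus R_CompleteNormedModule). apply exRI; apply cont_conv; auto.
      apply exRI. intro z. apply continuous_const. }
    change (RInt (fun x => minus (G x) m) 0 T = 0). rewrite E.
    rewrite (@RInt_const R_CompleteNormedModule). rewrite scalR.
    unfold minus, plus, opp; simpl. unfold m. field. lra. }
  exists (fun x => RInt G0 0 x), G0. split; [|split].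
  - apply prim_der; auto.
  - auto.
  - apply prim_per; auto.
Qed.

Fixpoint itr (Phi : (R -> R) -> R -> R) (x0 : R -> R) (j : nat) : R -> R :=
  match j with O => x0 | S j => Phi (itr Phi x0 j) end.

Lemma lip_cont (F : R -> R) L : 0 <= L -> (forall a b, Rabs (F a - F b) <= L * Rabs (a - b)) ->
  forall x, continuity_pt F x.
Proof.
  intros HL H x. unfold continuity_pt, continue_in, limit1_in, limit_in.
  intros eps He. exists (eps / (L + 1)). split.
  - apply Rdiv_lt_0_compat; lra.
  - intros y [_ Hy]. simpl in *. unfold R_dist in *.
    eapply Rle_lt_trans. apply H.
    apply Rle_lt_trans with ((L + 1) * Rabs (y - x)).
    pose proof (Rabs_pos (y - x)). nra.
    apply Rmult_lt_reg_r with (/ (L + 1)). apply Rinv_0_lt_compat; lra.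
    replace ((L + 1) * Rabs (y - x) * / (L + 1)) with (Rabs (y - x)) by (field; lra).
    exact Hy.
Qed.

Lemma der_scaled (H H1 : R -> R) c d r : (forall u, derivable_pt_lim H u (H1 u)) ->
  forall t, derivable_pt_lim (fun t => c + d * H (r * t)) t (d * r * H1 (r * t)).
Proof.
  intros HH t. apply is_derive_Reals.
  assert (E : is_derive (fun t => H (r * t)) t (scal r (H1 (r * t)))).
  { apply (is_derive_comp H (fun t => r * t)). apply is_derive_Reals, HH.
    auto_derive; auto. rewrite Rmult_1_r. reflexivity. }
  rewrite scalR in E.
  pose proof (is_derive_scal _ t d _ E) as E2.
  pose proof (der_plus (fun _ => c) _ t 0 _ (is_derive_const c t) E2) as E3.
  replace (d * r * H1 (r * t)) with (0 + d * (r * H1 (r * t))) by ring. exact E3.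
Qed.

Lemma der_minus' (f g f' g' : R -> R) : (forall t, derivable_pt_lim f t (f' t)) ->
  (forall t, derivable_pt_lim g t (g' t)) -> forall t, derivable_pt_lim (fun s => f s - g s) t (f' t - g' t).
Proof. intros Hf Hg t. apply derivable_pt_lim_minus; auto. Qed.

Section Main.
Variables (f g H H1 : R -> R) (T Mf Mg Mh eps : R) (n : nat).
Hypotheses (HT : 0 < T) (Hfc : forall t, continuity_pt f t) (Hgc : forall t, continuity_pt g t)
  (Hfp : periodic T f) (Hgp : periodic T g)
  (HMf : forall t, Rabs (f t) <= Mf) (HMg : forall t, Rabs (g t) <= Mg)
  (HH : forall u, derivable_pt_lim H u (H1 u)) (HH1 : forall u, derivable_pt_lim H1 u (g u))
  (HHp : periodic T H) (HMh : forall u, Rabs (H u) <= Mh)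
  (Heps0 : 0 < eps) (Heps : eps * (4 * (1 + Mf + Mg)) <= 1)
  (Hr1 : 1 <= INR n) (Hrh : Mh / (INR n * INR n) <= eps / 2).

Let r := INR n.
Let K := Mf + 1 + Mg.
Let k := K + 1.
Let F t y := f t * sin y - (1 + g (r * t)) * cos y.
Let N t y := k ^ 2 * y - F t y.

Lemma Mf0 : 0 <= Mf. Proof. pose proof (HMf 0). pose proof (Rabs_pos (f 0)). lra. Qed.
Lemma Mg0 : 0 <= Mg. Proof. pose proof (HMg 0). pose proof (Rabs_pos (g 0)). lra. Qed.
Lemma k_pos : 1 <= k /\ K <= k ^ 2.
Proof. pose proof Mf0; pose proof Mg0. unfold k, K. split; nra. Qed.

Lemma gr_per : periodic T (fun t => g (r * t)).
Proof.
  intro t. simpl. replace (r * (t + T)) with (r * t + INR n * T) by (unfold r; ring).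
  apply per_nat; auto.
Qed.

Lemma gr_cont t : continuity_pt (fun t => g (r * t)) t.
Proof.
  apply (continuity_pt_comp (fun t => r * t) g). apply derivable_continuous_pt.
  exists r. apply is_derive_Reals. auto_derive; auto. apply Rmult_1_r. apply Hgc.
Qed.

Lemma F_lip t x y : Rabs (F t y - F t x) <= K * Rabs (y - x).
Proof.
  unfold F, K.
  replace (f t * sin y - (1 + g (r * t)) * cos y - (f t * sin x - (1 + g (r * t)) * cos x))
    with (f t * (sin y - sin x) - (1 + g (r * t)) * (cos y - cos x)) by ring.
  eapply Rle_trans. apply Rabs_triang. rewrite Rabs_Ropp, !Rabs_mult.
  pose proof (sin_lip x y). pose proof (cos_lip x y). pose proof (HMf t). pose proof (HMg (r * t)).
  assert (Rabs (1 + g (r * t)) <= 1 + Mg).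
  { eapply Rle_trans. apply Rabs_triang. rewrite Rabs_R1. lra. }
  pose proof (Rabs_pos (f t)). pose proof (Rabs_pos (1 + g (r * t))).
  pose proof (Rabs_pos (sin y - sin x)). pose proof (Rabs_pos (cos y - cos x)).
  pose proof (Rabs_pos (y - x)). nra.
Qed.

Lemma N_mono t x y : x <= y -> N t x <= N t y.
Proof.
  intro Hxy. unfold N. pose proof (F_lip t x y). apply absI in H0.
  rewrite Rabs_pos_eq in H0 by lra. pose proof k_pos. nra.
Qed.

Lemma N_lip t x y : Rabs (N t y - N t x) <= (k ^ 2 + K) * Rabs (y - x).
Proof.
  unfold N. replace (k ^ 2 * y - F t y - (k ^ 2 * x - F t x)) with (k ^ 2 * (y - x) - (F t y - F t x)) by ring.
  eapply Rle_trans. apply Rabs_triang. rewrite Rabs_Ropp, Rabs_mult.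
  rewrite (Rabs_pos_eq (k ^ 2)) by (apply pow2_ge_0). pose proof (F_lip t x y). lra.
Qed.

Lemma N_bound t y : 0 <= y <= 4 -> Rabs (N t y) <= 4 * k ^ 2 + K.
Proof.
  intro Hy. unfold N, F, K.
  pose proof (HMf t). pose proof (HMg (r * t)). pose proof (SIN_bound y). pose proof (COS_bound y).
  apply absI in H0. apply absI in H2. pose proof (pow2_ge_0 k).
  apply Rabs_le. split; nra.
Qed.

Lemma N_cont (x : R -> R) : (forall t, continuity_pt x t) -> forall t, continuity_pt (fun s => N s (x s)) t.
Proof.
  intros Hx t. unfold N, F.
  apply continuity_pt_minus. apply continuity_pt_mult. apply continuity_pt_const. intros a b; auto. apply Hx.
  apply continuity_pt_minus. apply continuity_pt_mult. apply Hfc.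
  apply (continuity_pt_comp x sin). apply Hx. apply continuity_sin.
  apply continuity_pt_mult. apply continuity_pt_plus. apply continuity_pt_const. intros a b; auto.
  apply gr_cont.
  apply (continuity_pt_comp x cos). apply Hx. apply continuity_cos.
Qed.

Lemma N_per (x : R -> R) : periodic T x -> periodic T (fun s => N s (x s)).
Proof.
  intros Hx t. unfold N, F. rewrite Hx, Hfp. pose proof (gr_per t). simpl in H0. rewrite H0. auto.
Qed.

Let c0 := / (r * r).
Let al t := eps + (- c0) * H (r * t).
Let al1 t := 0 + ((- c0) * r) * H1 (r * t).
Let al2 t := (- c0) * r * r * g (r * t).
Let be t := (PI - eps) + c0 * H (r * t).
Let be1 t := 0 + (c0 * r) * H1 (r * t).
Let be2 t := c0 * r * r * g (r * t).

Lemma al_d t : derivable_pt_lim al t (al1 t).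
Proof. unfold al, al1. rewrite Rplus_0_l. apply (der_scaled _ _ _ _ _ HH); auto. Qed.
Lemma al1_d t : derivable_pt_lim al1 t (al2 t).
Proof. unfold al1, al2. apply (der_scaled _ _ _ _ _ HH1); auto. Qed.
Lemma be_d t : derivable_pt_lim be t (be1 t).
Proof. unfold be, be1. rewrite Rplus_0_l. apply (der_scaled _ _ _ _ _ HH); auto. Qed.
Lemma be1_d t : derivable_pt_lim be1 t (be2 t).
Proof. unfold be1, be2. apply (der_scaled _ _ _ _ _ HH1); auto. Qed.

Lemma c0rr : c0 * r * r = 1.
Proof. unfold c0. field. unfold r; lra. Qed.

Lemma Hsmall t : Rabs (c0 * H (r * t)) <= eps / 2.
Proof.
  rewrite Rabs_mult. unfold c0. rewrite Rabs_pos_eq.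
  2: { left. apply Rinv_0_lt_compat. unfold r. nra. }
  pose proof (HMh (r * t)). unfold r in *.
  assert (0 < / (INR n * INR n)) by (apply Rinv_0_lt_compat; nra).
  apply Rle_trans with (/ (INR n * INR n) * Mh). apply Rmult_le_compat_l; lra.
  unfold Rdiv in Hrh. lra.
Qed.

Lemma eps_small : eps <= 1 / 4.
Proof. pose proof Mf0; pose proof Mg0. nra. Qed.

Lemma al_range t : eps / 2 <= al t <= 3 * eps / 2.
Proof. pose proof (Hsmall t). apply absI in H0. unfold al. lra. Qed.

Lemma be_range t : eps / 2 <= PI - be t <= 3 * eps / 2.
Proof. pose proof (Hsmall t). apply absI in H0. unfold be. lra. Qed.

Lemma al_be t : al t <= be t.
Proof. pose proof (al_range t). pose proof (be_range t). pose proof eps_small. pose proof PI2_1. lra. Qed.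

Lemma al_lower t : F t (al t) <= al2 t.
Proof.
  unfold al2.
  replace (- c0 * r * r * g (r * t)) with (- (c0 * r * r) * g (r * t)) by ring.
  rewrite c0rr.
  pose proof (key_trig Mf Mg eps (al t) (f t) (g (r * t)) Mf0 Mg0 Heps0 Heps (al_range t) (HMf t) (HMg _)).
  unfold F. nra.
Qed.

Lemma be_upper t : be2 t <= F t (be t).
Proof.
  unfold be2. replace (c0 * r * r * g (r * t)) with ((c0 * r * r) * g (r * t)) by ring.
  rewrite c0rr.
  assert (Hm : Rabs (- f t) <= Mf) by (rewrite Rabs_Ropp; auto).
  pose proof (key_trig Mf Mg eps (PI - be t) (- f t) (g (r * t)) Mf0 Mg0 Heps0 Heps (be_range t) Hm (HMg _)).
  unfold F. replace (be t) with (PI - (PI - be t)) by ring.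
  rewrite sin_PI_x, Rtrigo_facts.cos_pi_minus. nra.
Qed.

Lemma al_per : periodic T al.
Proof.
  intro t. unfold al. f_equal. f_equal. replace (r * (t + T)) with (r * t + INR n * T) by (unfold r; ring).
  apply per_nat; auto.
Qed.

Lemma be_per : periodic T be.
Proof.
  intro t. unfold be. f_equal. f_equal. replace (r * (t + T)) with (r * t + INR n * T) by (unfold r; ring).
  apply per_nat; auto.
Qed.

Let v (x : R -> R) := fun s => N s (x s).
Let xs := itr (fun x => Sop k T (v x)) al.

Lemma k0 : 0 < k.
Proof. pose proof k_pos. lra. Qed.

Lemma k20 : 0 < k ^ 2.
Proof. pose proof k_pos. nra. Qed.

Lemma xs_cp j : (forall t, continuity_pt (xs j) t) /\ periodic T (xs j).
Proof.
  induction j as [|j [IHc IHp]].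
  - split. apply (deriv_cont al al1 al_d). apply al_per.
  - assert (Hvc : forall t, continuity_pt (v (xs j)) t) by (apply N_cont; auto).
    assert (Hvp : periodic T (v (xs j))) by (apply N_per; auto).
    split.
    + apply (deriv_cont _ _ (Sop_der k T (v (xs j)) Hvc Hvp)).
    + apply Sop_per; auto.
Qed.

Lemma vc j : forall t, continuity_pt (v (xs j)) t.
Proof. apply N_cont. apply xs_cp. Qed.
Lemma vp j : periodic T (v (xs j)).
Proof. apply N_per. apply xs_cp. Qed.

Lemma xsS_d j t : derivable_pt_lim (xs (S j)) t (S1 k T (v (xs j)) t).
Proof. apply (Sop_der k T (v (xs j)) (vc j) (vp j)). Qed.
Lemma xsS_dd j t : derivable_pt_lim (S1 k T (v (xs j))) t (k ^ 2 * xs (S j) t - v (xs j) t).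
Proof. apply (S1_der k T (v (xs j)) k0 HT (vc j) (vp j)). Qed.

Lemma xs_bounds j : forall t, al t <= xs j t <= be t.
Proof.
  induction j as [|j IH]; intro t0.
  - unfold xs; simpl. pose proof (al_be t0). split; lra.
  - split.
    + assert (Hw : forall t, 0 <= xs (S j) t - al t).
      { apply (max_princ T (k ^ 2) _ (fun t => S1 k T (v (xs j)) t - al1 t)
           (fun t => (k ^ 2 * xs (S j) t - v (xs j) t) - al2 t) HT k20).
        - intro t. simpl. rewrite (proj2 (xs_cp (S j))), al_per. auto.
        - apply der_minus'. apply xsS_d. apply al_d.
        - apply der_minus'. apply xsS_dd. apply al1_d.
        - intro t. pose proof (al_lower t). pose proof (N_mono t _ _ (proj1 (IH t))).
          unfold v, N in *. nra. }
      specialize (Hw t0). lra.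
    + assert (Hw : forall t, 0 <= be t - xs (S j) t).
      { apply (max_princ T (k ^ 2) _ (fun t => be1 t - S1 k T (v (xs j)) t)
           (fun t => be2 t - (k ^ 2 * xs (S j) t - v (xs j) t)) HT k20).
        - intro t. simpl. rewrite (proj2 (xs_cp (S j))), be_per. auto.
        - apply der_minus'. apply be_d. apply xsS_d.
        - apply der_minus'. apply be1_d. apply xsS_dd.
        - intro t. pose proof (be_upper t). pose proof (N_mono t _ _ (proj2 (IH t))).
          unfold v, N in *. nra. }
      specialize (Hw t0). lra.
Qed.

Lemma xs_mono j : forall t, xs j t <= xs (S j) t.
Proof.
  induction j as [|j IH]; intro t0.
  - apply (xs_bounds 1).
  - assert (Hw : forall t, 0 <= xs (S (S j)) t - xs (S j) t).
    { apply (max_princ T (k ^ 2) _ (fun t => S1 k T (v (xs (S j))) t - S1 k T (v (xs j)) t)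
         (fun t => (k ^ 2 * xs (S (S j)) t - v (xs (S j)) t) - (k ^ 2 * xs (S j) t - v (xs j) t)) HT k20).
      - intro t. simpl. rewrite (proj2 (xs_cp (S (S j)))), (proj2 (xs_cp (S j))). auto.
      - apply der_minus'. apply xsS_d. apply xsS_d.
      - apply der_minus'. apply xsS_dd. apply xsS_dd.
      - intro t. pose proof (N_mono t _ _ (IH t)). unfold v in *. nra. }
    specialize (Hw t0). lra.
Qed.

Let ys j := xs (S j).
Let V := 4 * k ^ 2 + K.
Let L := cS k T * k * (2 * T * V).

Lemma v_bound j s : Rabs (v (xs j) s) <= V.
Proof.
  apply N_bound. pose proof (xs_bounds j s). pose proof (al_range s). pose proof (be_range s).
  pose proof PI_4. split; lra.
Qed.

Lemma L0 : 0 <= L.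
Proof.
  pose proof (cS_pos k T k0 HT). pose proof k_pos. pose proof Mf0. pose proof Mg0.
  unfold L, V, K. assert (0 <= 4 * k ^ 2 + (Mf + 1 + Mg)) by nra.
  apply Rmult_le_pos. nra. nra.
Qed.

Lemma ys_lip j s1 s2 : Rabs (ys j s1 - ys j s2) <= L * Rabs (s1 - s2).
Proof.
  destruct (MVT_abs (xs (S j)) (S1 k T (v (xs j))) s2 s1) as [c [E _]].
  { intros; apply xsS_d. }
  unfold ys. rewrite E. apply Rmult_le_compat_r. apply Rabs_pos.
  apply (S1_bound k T k0 HT (v (xs j)) V (vc j) (v_bound j)).
Qed.

Lemma ys_mono j s : ys j s <= ys (S j) s.
Proof. apply xs_mono. Qed.

Let xl t := real (Lim_seq (fun j => ys j t)).

Lemma xl_lim t : is_lim_seq (fun j => ys j t) (xl t).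
Proof.
  apply Lim_seq_correct'. apply ex_finite_lim_seq_incr with (M := be t).
  intros; apply ys_mono. intros; apply (xs_bounds (S n0)).
Qed.

Lemma xl_range t : al t <= xl t <= be t.
Proof.
  split.
  - apply (lim_ge_ev _ _ _ O (xl_lim t)). intros; apply (xs_bounds (S m)).
  - apply (lim_le_ev _ _ _ O (xl_lim t)). intros; apply (xs_bounds (S m)).
Qed.

Lemma xl_cont t : continuity_pt xl t.
Proof. apply (lip_cont xl L L0). apply (lim_lip ys xl L xl_lim ys_lip). Qed.

Lemma xl_per : periodic T xl.
Proof.
  intro t. pose proof (xl_lim (t + T)) as H0.
  assert (H2 : is_lim_seq (fun j => ys j t) (xl (t + T))).
  { apply is_lim_seq_ext with (u := fun j => ys j (t + T)); auto.
    intro j. apply (proj2 (xs_cp (S j))). }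
  unfold xl at 2. rewrite (is_lim_seq_unique _ _ H2). reflexivity.
Qed.

Let w := v xl.

Lemma w_cont t : continuity_pt w t.
Proof. apply N_cont. apply xl_cont. Qed.
Lemma w_per : periodic T w.
Proof. apply N_per. apply xl_per. Qed.

Lemma xl_fix t : xl t = Sop k T w t.
Proof.
  assert (HA : is_lim_seq (fun j => ys (S j) t) (xl t)).
  { apply (proj1 (is_lim_seq_incr_1 (fun j => ys j t) (xl t))). apply xl_lim. }
  assert (HB : is_lim_seq (fun j => Sop k T (v (ys j)) t) (Sop k T w t)).
  { apply (Sop_conv k T k0 HT (fun j => v (ys j)) w t (fun j => vc (S j)) w_cont).
    intros e He.
    assert (Hc : 0 < k ^ 2 + K) by (pose proof k_pos; pose proof Mf0; pose proof Mg0; unfold K; nra).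
    destruct (unif_conv ys xl L ys_mono xl_lim L0 ys_lip (t - T) (t + T) (e / (k ^ 2 + K)))
      as [J HJ].
    { apply Rdiv_lt_0_compat; lra. }
    exists J. intros j Hj s Hs. specialize (HJ j Hj s Hs).
    unfold w, v. pose proof (N_lip s (xl s) (ys j s)).
    apply Rle_trans with ((k ^ 2 + K) * Rabs (ys j s - xl s)). exact H0.
    apply Rle_trans with ((k ^ 2 + K) * (e / (k ^ 2 + K))).
    apply Rmult_le_compat_l; lra. right; field; lra. }
  apply is_lim_seq_unique in HA. apply is_lim_seq_unique in HB.
  assert (E : Lim_seq (fun j => ys (S j) t) = Lim_seq (fun j => Sop k T (v (ys j)) t)) by reflexivity.
  rewrite E, HB in HA. injection HA. auto.
Qed.

Lemma main_n : exists x : R -> R,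
  is_solution (fun t y => f t * sin y - (1 + g (INR n * t)) * cos y) x /\ periodic T x /\ (forall t, 0 < x t < PI).
Proof.
  exists (Sop k T w). split; [|split].
  - exists (S1 k T w). split.
    + apply (Sop_der k T w w_cont w_per).
    + intro t. pose proof (S1_der k T w k0 HT w_cont w_per t) as D.
      replace (f t * sin (Sop k T w t) - (1 + g (INR n * t)) * cos (Sop k T w t))
        with (k ^ 2 * Sop k T w t - w t); auto.
      rewrite <- xl_fix. unfold w, v, N, F, r. ring.
  - apply Sop_per. apply w_cont. apply w_per.
  - intro t. rewrite <- xl_fix. pose proof (xl_range t). pose proof (al_range t). pose proof (be_range t).
    split; lra.
Qed.

End Main.

Theorem theorem3p8 (f g : R -> R) (T : R) :
  0 < T ->
  smooth f -> smooth g ->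
  periodic T f -> periodic T g ->
  (exists pr : Riemann_integrable g 0 T, RiemannInt pr / T = 0) ->
  exists lambda0 : R,
    forall n : nat, lambda0 <= INR n ->
      exists x : R -> R,
        is_solution
          (fun t y => f t * sin y - (1 + g (INR n * t)) * cos y) x /\
        periodic T x /\
        (forall t, 0 < x t < PI).
Proof.
  intros HT Hsf Hsg Hfp Hgp [pr Hpr].
  pose proof (smooth_cont f Hsf) as Hfc. pose proof (smooth_cont g Hsg) as Hgc.
  assert (HI : RInt g 0 T = 0).
  { rewrite (RInt_Reals g 0 T pr).
    replace (RiemannInt pr) with (RiemannInt pr / T * T) by (field; lra). rewrite Hpr. apply Rmult_0_l. }
  destruct (per_bounded T f HT Hfp Hfc) as [Mf HMf].
  destruct (per_bounded T g HT Hgp Hgc) as [Mg HMg].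
  destruct (lower_build g T HT Hgc Hgp HI) as [H [H1 [HH [HH1 HHp]]]].
  destruct (per_bounded T H HT HHp (deriv_cont H H1 HH)) as [Mh HMh].
  assert (Mf0 : 0 <= Mf) by (pose proof (HMf 0); pose proof (Rabs_pos (f 0)); lra).
  assert (Mg0 : 0 <= Mg) by (pose proof (HMg 0); pose proof (Rabs_pos (g 0)); lra).
  assert (Mh0 : 0 <= Mh) by (pose proof (HMh 0); pose proof (Rabs_pos (H 0)); lra).
  set (eps := 1 / (4 * (1 + Mf + Mg))).
  assert (Heps0 : 0 < eps) by (unfold eps; apply Rdiv_lt_0_compat; lra).
  assert (Heps : eps * (4 * (1 + Mf + Mg)) <= 1) by (unfold eps; right; field; lra).
  exists (1 + 2 * Mh / eps). intros n Hn.
  assert (Hn1 : 1 <= INR n).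
  { assert (0 <= 2 * Mh / eps) by (apply Rmult_le_pos; [lra| left; apply Rinv_0_lt_compat; lra]). lra. }
  apply (main_n f g H H1 T Mf Mg Mh eps n); auto.
  assert (Hm : Mh <= INR n * eps / 2).
  { assert (E : 2 * Mh / eps * eps = 2 * Mh) by (field; lra). nra. }
  assert (Hnn : 0 < INR n * INR n) by nra.
  replace (eps / 2) with ((eps / 2 * (INR n * INR n)) / (INR n * INR n)) by (field; lra).
  unfold Rdiv. apply Rmult_le_compat_r. left; apply Rinv_0_lt_compat; lra. nra.
Qed.
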